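(* For all integers $n\geq 0$ and all real $x\in(0,\pi)$, $$\sum_{k=0}^{n}(n-k+1)\sin\bigl((2k+1/2)x\bigr)>0 .$$ *)

(* Defs.v *)
From Stdlib Require Import Reals.

(* Main.v *)
Require Import Defs.
From Stdlib Require Import Reals Lra Psatz.
Open Scope R_scope.

Lemma sin_ub_poly a : sin_ub a = a - a^3/6 + a^5/120 - a^7/5040 + a^9/362880.
Proof. unfold sin_ub, sin_approx, sin_term. cbn [sum_f_R0 Nat.mul Nat.add].
 repeat rewrite fact_simpl, mult_INR. cbn [Factorial.fact]. simpl INR. field. Qed.
Lemma sin_lb_poly a : sin_lb a = a - a^3/6 + a^5/120 - a^7/5040.
Proof. unfold sin_lb, sin_approx, sin_term. cbn [sum_f_R0 Nat.mul Nat.add].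
 repeat rewrite fact_simpl, mult_INR. cbn [Factorial.fact]. simpl INR. field. Qed.

Lemma sin_lower t : 0 <= t -> t <= 2 -> t - t^3/6 <= sin t.
Proof.
  intros H1 H2. assert (HP := PI_4). assert (HP2 := PI2_3_2).
  destruct (SIN t) as [Hl _]; try lra. rewrite sin_lb_poly in Hl.
  assert (t^5/120 - t^7/5040 >= 0).
  { assert (t^7 = t^5 * (t*t)) by ring. assert (0 <= t^5) by (apply pow_le; lra).
    assert (t*t <= 4) by nra. assert (t^5*(t*t) <= t^5*4) by (apply Rmult_le_compat_l; lra). lra. }
  lra.
Qed.

Lemma sin_upper y : 0 <= y -> y <= 3 -> sin y <= y - y^3/6 + y^5/120.
Proof.
  intros H1 H2. assert (HP2 := PI2_3_2).
  destruct (SIN y) as [_ Hu]; try lra. rewrite sin_ub_poly in Hu.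
  assert (y^9/362880 - y^7/5040 <= 0).
  { assert (y^9 = y^7 * (y*y)) by ring. assert (0 <= y^7) by (apply pow_le; lra).
    assert (y*y <= 9) by nra. assert (y^7*(y*y) <= y^7*9) by (apply Rmult_le_compat_l; lra). lra. }
  lra.
Qed.

Lemma keyP N t : 5 <= N -> 0 < t -> t < PI/2 ->
  0 < N * sin t - (N-1) * sin t ^ 3 - sin (N * t).
Proof.
  intros HN Ht0 Ht1. assert (HP := PI_4). assert (HP2 := PI2_3_2).
  assert (Hs0 : 0 < sin t) by (apply sin_gt_0; lra).
  assert (Hs1 := sin_lt_x t Ht0).
  destruct (Rle_lt_dec (N*t) 3) as [Hy|Hy].
  - assert (Hu := sin_upper (N*t) ltac:(nra) Hy).
    assert (Hl := sin_lower t ltac:(lra) ltac:(lra)).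
    assert (Hc : sin t ^ 3 <= t^3).
    { apply pow_incr; lra. }
    assert (HB : 0 < N^3/6 - 7*N/6 + 1 - N^5*t^2/120).
    { assert (N^5*t^2 = N^3 * ((N*t)*(N*t))) by ring.
      assert (0 < N^3) by (apply pow_lt; lra).
      assert (0 <= N*t) by (apply Rmult_le_pos; lra).
      assert ((N*t)*(N*t) <= 3*3) by (apply Rmult_le_compat; lra).
      assert (N^3 * ((N*t)*(N*t)) <= N^3 * 9) by (apply Rmult_le_compat_l; lra).
      assert (N^3 = N*(N*N)) by ring. assert (25 <= N*N) by nra.
      assert (25*N <= N*(N*N)) by nra. lra. }
    assert (Hk : N * (t - t^3/6) - (N-1) * t^3 - (N*t - (N*t)^3/6 + (N*t)^5/120)
                 = t^3 * (N^3/6 - 7*N/6 + 1 - N^5*t^2/120)) by field.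
    assert (0 < t^3) by (apply pow_lt; lra).
    assert (0 < t^3 * (N^3/6 - 7*N/6 + 1 - N^5*t^2/120)) by nra.
    nra.
  - assert (H3 : 3/N < t).
    { apply (Rmult_lt_reg_r N); [lra|]. field_simplify; lra. }
    assert (H3p : 0 < 3/N) by (apply Rdiv_lt_0_compat; lra).
    assert (H3b : 3/N <= 3/5).
    { apply Rmult_le_reg_r with N; [lra|]. field_simplify; lra. }
    assert (Hm : sin (3/N) < sin t) by (apply sin_increasing_1; lra).
    assert (Hl := sin_lower (3/N) ltac:(lra) ltac:(lra)).
    assert (Hs : 1 < (N-1) * sin t).
    { assert (1 < (N-1) * (3/N - (3/N)^3/6)).
      { set (u := 3/N). assert (Hu : u * N = 3) by (unfold u; field; lra).
        assert (E : (N-1) * (u - u^3/6) = (N*u - u) * (1 - u*u/6)) by field.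
        rewrite E. assert (N*u = 3) by lra. rewrite H.
        assert (u*u <= 1) by nra. nra. }
      nra. }
    assert (Hlt1 : sin t < 1).
    { rewrite <- sin_PI2. apply sin_increasing_1; lra. }
    assert (Hb := SIN_bound (N*t)).
    assert (Hk : N * sin t - (N-1) * sin t ^3 - 1 =
      (1 - sin t) * ((N-1) * sin t ^ 2 + (N-1) * sin t - 1)) by ring.
    assert (0 <= (N-1) * sin t ^ 2) by (assert (0 <= sin t ^2) by (apply pow_le; lra); nra).
    nra.
Qed.
Lemma rearr (g : nat -> R) (n : nat) :
  sum_f_R0 (fun k => (INR n - INR k + 1) * g k) n = sum_f_R0 (fun m => sum_f_R0 g m) n.
Proof.
  induction n as [|n IH].
  - simpl. ring.
  - cbn [sum_f_R0].
    rewrite (sum_eq _ (fun k => (INR n - INR k + 1) * g k + g k)).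
    2:{ intros i _. rewrite S_INR. ring. }
    rewrite sum_plus, IH. ring.
Qed.

Lemma H1 a b : 2 * sin b * sin a = cos (a - b) - cos (a + b).
Proof. rewrite cos_minus, cos_plus. ring. Qed.
Lemma H2 a b : 2 * sin b * cos a = sin (a + b) - sin (a - b).
Proof. rewrite sin_minus, sin_plus. ring. Qed.

Lemma Tsum x m : 2 * sin x * sum_f_R0 (fun k => sin ((2 * INR k + 1/2) * x)) m
   = cos (x/2) - cos ((2 * INR m + 3/2) * x).
Proof.
  induction m as [|m IH].
  - simpl. rewrite H1. replace ((2*0+1/2)*x - x) with (-(x/2)) by field.
    rewrite cos_neg. replace ((2*0+1/2)*x + x) with ((2*0+3/2)*x) by field. ring.
  - cbn [sum_f_R0]. rewrite Rmult_plus_distr_l, IH, H1, S_INR.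
    replace ((2 * (INR m + 1) + 1/2) * x - x) with ((2 * INR m + 3/2) * x) by field.
    replace ((2 * (INR m + 1) + 1/2) * x + x) with ((2 * (INR m + 1) + 3/2) * x) by field.
    ring.
Qed.

Lemma Ssum x n : 4 * sin x ^ 2 * sum_f_R0 (fun m => sum_f_R0 (fun k => sin ((2 * INR k + 1/2) * x)) m) n
  = 2 * (INR n + 1) * sin x * cos (x/2) + sin (x/2) - sin ((2 * INR n + 5/2) * x).
Proof.
  induction n as [|n IH].
  - pose proof (Tsum x 0) as T. cbn [sum_f_R0] in T |- *.
    transitivity (2 * sin x * (2 * sin x * sin ((2 * INR 0 + 1/2) * x))); [ring|].
    rewrite T, Rmult_minus_distr_l, (H2 ((2 * INR 0 + 3/2) * x)). simpl INR.
    replace ((2*0+3/2)*x + x) with ((2*0+5/2)*x) by field.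
    replace ((2*0+3/2)*x - x) with (x/2) by field. ring.
  - cbn [sum_f_R0 sum_f_R0]. rewrite Rmult_plus_distr_l, IH.
    replace (4 * sin x ^ 2 * (sum_f_R0 (fun k => sin ((2 * INR k + 1/2) * x)) n + sin ((2 * INR (S n) + 1/2) * x)))
      with (2 * sin x * (2 * sin x * sum_f_R0 (fun k => sin ((2 * INR k + 1/2) * x)) (S n))) by (simpl; ring).
    rewrite Tsum, Rmult_minus_distr_l, (H2 ((2 * INR (S n) + 3/2) * x)), S_INR.
    replace ((2 * (INR n + 1) + 3/2) * x + x) with ((2 * (INR n + 1) + 5/2) * x) by field.
    replace ((2 * (INR n + 1) + 3/2) * x - x) with ((2 * INR n + 5/2) * x) by field.
    ring.
Qed.

Theorem mainTheorem4 (n : nat) (x : R) (hx0 : 0 < x) (hxpi : x < PI) :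
  0 < sum_f_R0 (fun k => (INR n - INR k + 1) * sin ((2 * INR k + 1 / 2) * x)) n.
Proof.
  rewrite (rearr (fun k => sin ((2 * INR k + 1 / 2) * x)) n).
  pose proof (Ssum x n) as E.
  set (S := sum_f_R0 _ n) in *.
  set (t := x/2).
  assert (Hx : x = 2 * t) by (unfold t; field).
  assert (Hsx : sin x = 2 * sin t * cos t) by (rewrite Hx; apply sin_2a).
  assert (HN : (2 * INR n + 5/2) * x = (4 * INR n + 5) * t) by (rewrite Hx; field).
  rewrite HN, Hsx in E. fold t in E.
  assert (Hc : cos t ^ 2 = 1 - sin t ^ 2).
  { pose proof (sin2_cos2 t) as Q. unfold Rsqr in Q. simpl. lra. }
  assert (Hn0 : 0 <= INR n) by apply pos_INR.
  assert (K := keyP (4 * INR n + 5) t ltac:(lra) ltac:(unfold t; lra) ltac:(unfold t; lra)).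
  assert (EF : 2 * (INR n + 1) * (2 * sin t * cos t) * cos t + sin t - sin ((4 * INR n + 5) * t)
     = (4 * INR n + 5) * sin t - (4 * INR n + 5 - 1) * sin t ^ 3 - sin ((4 * INR n + 5) * t)).
  { replace (2 * (INR n + 1) * (2 * sin t * cos t) * cos t) with (4 * (INR n + 1) * sin t * cos t ^ 2) by ring.
    rewrite Hc. ring. }
  rewrite EF in E.
  assert (Hs : 0 < sin x) by (apply sin_gt_0; lra).
  assert (Hp : 0 < 4 * sin x ^ 2) by (simpl; nra).
  rewrite <- Hsx in E.
  destruct (Rle_lt_dec S 0) as [h|h]; [|exact h].
  assert (4 * sin x ^ 2 * S <= 0) by nra. lra.
Qed.
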